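(* Let $p,p'\ge 1$ be integers with $|p-p'|=1$, let $\alpha_{(p,p')}$ be the morphism $a\mapsto a^pb$, $b\mapsto a^{p'}b$, and let $Y$ be a finite word over $\{a,b\}$ such that $X=\alpha_{(p,p')}(Y)$ is a finite Sturmian word. Then: (i) $|K_{(X,a)}| = p|Y|_a + p'|Y|_b$; (ii) $|K_{(X,b)}| = |Y|$; (iii) $|K_{(X,aa)}| = (p-1)|Y|_a + (p'-1)|Y|_b$; (iv) $|K_X| = 2|X|-2|Y|$, and this equals $2|Y|_a+2p'|Y|$ when $p>p'$ and $2|Y|_b+2p|Y|$ when $p<p'$.
   Context: Words are over the alphabet $\{a,b\}$. A Sturmian word is a right-infinite aperiodic word over $\{a,b\}$ of minimal factor complexity (exactly $n+1$ distinct factors of each length $n$); a finite Sturmian word is a finite factor of some Sturmian word. $|X|$ is the length of $X$ and $|X|_l$ the number of occurrences of the letter $l$ in $X$; $X[i]$ is the letter at position $i$ and $X[i..j]$ the factor from position $i$ to $j$. A palindrome is a word equal to its reverse. Every palindrome has a center: its middle letter if its length is odd, its middle two letters if its length is even. For $c\in\{a,b,aa\}$, $K_{(X,c)}$ denotes the set of occurrences of $c$ in $X$, i.e. $\{(i,c): X[i..i+|c|-1]=c\}$; each such occurrence is regarded as the center of exactly one maximal palindrome occurrence (the longest palindromic factor of $X$ centered there), so $K_{(X,c)}$ is the set of maximal palindrome occurrences in $X$ with center $c$. $K_X=K_{(X,a)}\cup K_{(X,aa)}\cup K_{(X,b)}$. *)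

(* Defs.v *)
From HB Require Import structures.
From mathcomp Require Import all_boot.
Set Implicit Arguments. Unset Strict Implicit. Unset Printing Implicit Defensive.

Inductive letter := a | b.

Definition letter_eqb (x y : letter) : bool :=
  match x, y with a, a | b, b => true | _, _ => false end.
Lemma letter_eqP : Equality.axiom letter_eqb.
Proof. by case; case; constructor. Qed.
HB.instance Definition _ := hasDecEq.Build letter letter_eqP.

Definition word := seq letter.

Definition nocc (X : word) (l : letter) : nat := count_mem l X.

Definition infword := nat -> letter.

Definition ifactor (x : infword) (i n : nat) : word := mkseq (fun j => x (i + j)) n.

Definition complexity_succ (x : infword) (n : nat) : Prop :=
  exists s : seq word, [/\ uniq s, size s = n.+1 &
    forall w : word, w \in s <-> (exists i, ifactor x i n = w)].

Definition aperiodic (x : infword) : Prop :=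
  ~ (exists q N, 0 < q /\ forall i, N <= i -> x (i + q) = x i).

Definition sturmian (x : infword) : Prop :=
  aperiodic x /\ forall n, complexity_succ x n.

Definition finite_sturmian (X : word) : Prop :=
  exists x : infword, sturmian x /\ exists i, X = ifactor x i (size X).

Definition alpha (p p' : nat) (Y : word) : word :=
  flatten [seq (if l is a then nseq p a ++ [:: b] else nseq p' a ++ [:: b]) | l <- Y].

Definition Kc (X : word) (c : word) : seq (nat * word) :=
  [seq (i, c) | i <- iota 0 (size X) & take (size c) (drop i X) == c].

Definition KX (X : word) : seq (nat * word) :=
  undup (Kc X [:: a] ++ Kc X [:: a; a] ++ Kc X [:: b]).

(* Main.v *)
Require Import Defs.
From HB Require Import structures.
From mathcomp Require Import all_boot.
From mathcomp Require Import zify.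

Definition cnt (c X : word) :=
  count (fun i => take (size c) (drop i X) == c) (iota 0 (size X)).

Lemma size_Kc X c : size (Kc X c) = cnt c X.
Proof. by rewrite /Kc size_map size_filter. Qed.

Lemma uniq_Kc X c : uniq (Kc X c).
Proof.
rewrite /Kc map_inj_uniq ?filter_uniq ?iota_uniq //.
by move=> i j [].
Qed.

Lemma cnt_cons c x X :
  cnt c (x :: X) = (take (size c) (x :: X) == c) + cnt c X.
Proof.
rewrite /cnt /= -(addn0 1) iotaDl count_map /=.
done.
Qed.

Lemma cnt_nil c : cnt c [::] = 0.
Proof. by []. Qed.

Lemma cnt1 l X : cnt [:: l] X = count_mem l X.
Proof.
elim: X => [|x X IH] //; rewrite cnt_cons IH /= take0.
by case: x; case: l in IH *.
Qed.

Lemma cnt_aa_block k V :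
  cnt [:: a; a] (nseq k a ++ b :: V) = k.-1 + cnt [:: a; a] V.
Proof.
elim: k => [|k IH].
  by rewrite /= cnt_cons.
rewrite /= cnt_cons IH /=.
case: k {IH} => [|k] //=.
by rewrite take0 eqxx add1n addSn.
Qed.

Lemma alpha_cons p p' l Y :
  alpha p p' (l :: Y) =
  nseq (if l is a then p else p') a ++ b :: alpha p p' Y.
Proof. by rewrite /alpha /=; case: l; rewrite -catA. Qed.

Lemma cnt_aa_alpha p p' Y :
  cnt [:: a; a] (alpha p p' Y) = (p - 1) * nocc Y a + (p' - 1) * nocc Y b.
Proof.
elim: Y => [|l Y IH]; first by rewrite /nocc /= !muln0.
rewrite alpha_cons cnt_aa_block IH /nocc /=.
case: l => /=; lia.
Qed.

Lemma cntl_alpha p p' Y :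
  count_mem a (alpha p p' Y) = p * nocc Y a + p' * nocc Y b /\
  count_mem b (alpha p p' Y) = size Y /\
  size (alpha p p' Y) = (p + 1) * nocc Y a + (p' + 1) * nocc Y b /\
  nocc Y a + nocc Y b = size Y.
Proof.
elim: Y => [|l Y [IH1 [IH2 [IH3 IH4]]]]; first by rewrite /nocc /= !muln0.
rewrite alpha_cons !count_cat size_cat /= !count_nseq size_nseq /nocc /=.
rewrite /nocc in IH1 IH2 IH3 IH4.
rewrite IH1 IH2 IH3 -IH4.
move: (count_mem a Y) (count_mem b Y) => x y.
by case: l => /=; (split; [|split; [|split]]); nia.
Qed.

Theorem theorem1 (p p' : nat) (Y : word) :
  1 <= p -> 1 <= p' -> (p = p'.+1 \/ p' = p.+1) ->
  finite_sturmian (alpha p p' Y) ->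
  let X := alpha p p' Y in
  [/\ size (undup (Kc X [:: a])) = p * nocc Y a + p' * nocc Y b,
      size (undup (Kc X [:: b])) = size Y,
      size (undup (Kc X [:: a; a])) = (p - 1) * nocc Y a + (p' - 1) * nocc Y b
    & [/\ size (KX X) = 2 * size X - 2 * size Y,
          p > p' -> size (KX X) = 2 * nocc Y a + 2 * p' * size Y
        & p < p' -> size (KX X) = 2 * nocc Y b + 2 * p * size Y]].
Proof.
move=> hp hp' hpp _ X.
have [H1 [H2 [H3 H4]]] := cntl_alpha p p' Y.
have HK : size (KX X) = size (Kc X [:: a]) + size (Kc X [:: a; a]) + size (Kc X [:: b]).
  rewrite /KX undup_id ?size_cat ?addnA //.
  rewrite !cat_uniq !uniq_Kc /= andbT.
  apply/andP; split; apply/hasPn => x /=.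
    rewrite mem_cat => /orP [] /mapP [i _ ->]; apply/mapP => [[j _ []]] //.
  by move=> /mapP [i _ ->]; apply/mapP => [[j _ []]].
rewrite HK !undup_id ?uniq_Kc // !size_Kc !cnt1 cnt_aa_alpha /X H1 H2 H3.
rewrite -H4 /nocc.
move: (count_mem a Y) (count_mem b Y) => x y.
case: hpp => ->; split => //; split; nia.
Qed.
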